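(* A set $\mathcal{K}\subseteq\wp(\mathcal{G})$ is coherent if and only if there is a proper filter $\mathfrak{D}$ on the set $\mathbf{C}$ of all coherent sets of desirable gambles — i.e. $\mathfrak{D}\subseteq\wp(\mathbf{C})$ with $\mathfrak{D}\neq\emptyset$, $\emptyset\notin\mathfrak{D}$, $\mathbb{D}_1\cap\mathbb{D}_2\in\mathfrak{D}$ whenever $\mathbb{D}_1,\mathbb{D}_2\in\mathfrak{D}$, and $\mathbb{D}_2\in\mathfrak{D}$ whenever $\mathbb{D}_1\in\mathfrak{D}$ and $\mathbb{D}_1\subseteq\mathbb{D}_2\subseteq\mathbf{C}$ — such that for all $B\subseteq\mathcal{G}$: $B\in\mathcal{K}$ iff there is $\mathbb{D}\in\mathfrak{D}$ with $B\cap D\neq\emptyset$ for all $D\in\mathbb{D}$. Moreover, for such a filter, the latter condition is equivalent to $\{D\in\mathbf{C}: B\cap D\neq\emptyset\}\in\mathfrak{D}$.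
   Context: $\Omega$ is a non-empty set and $\mathcal{G}$ is the set of bounded functions $\Omega\to\mathbb{R}$. $f\geq g$ means pointwise $\geq$; $f\gneq g$ means $f\geq g$ and $f\neq g$; $\mathcal{G}_{\gneq 0}=\{f: f\gneq 0\}$. $\mathrm{posi}(B)=\{\sum_{i=1}^m\lambda_i h_i: m\geq1,\lambda_i>0,h_i\in B\}$. A set $D\subseteq\mathcal{G}$ is coherent if $0\notin D$; $\mathcal{G}_{\gneq0}\subseteq D$; $\lambda g\in D$ whenever $g\in D,\lambda>0$; and $f+g\in D$ whenever $f,g\in D$. A set $\mathcal{K}\subseteq\wp(\mathcal{G})$ is coherent if: (K$_\emptyset$) $\emptyset\notin\mathcal{K}$; (K$_0$) if $A\in\mathcal{K}$ then $A\setminus\{0\}\in\mathcal{K}$; (K$_{\gneq0}$) if $g\in\mathcal{G}_{\gneq0}$ then $\{g\}\in\mathcal{K}$; (K$_\supseteq$) if $A\in\mathcal{K}$ and $B\supseteq A$ then $B\in\mathcal{K}$; (K$_{\mathrm{Dom}}$) if $A\in\mathcal{K}$ and for each $g\in A$, $f_g$ is a gamble with $f_g\geq g$, then $\{f_g: g\in A\}\in\mathcal{K}$; (K$_{\mathrm{Add}}$) if $A_1,\ldots,A_n\in\mathcal{K}$ (finitely many) and for each $\langle g_1,\ldots,g_n\rangle\in A_1\times\cdots\times A_n$, $f_{\langle g_1,\ldots,g_n\rangle}$ is some member of $\mathrm{posi}(\{g_1,\ldots,g_n\})$, then $\{f_{\langle g_1,\ldots,g_n\rangle}:\langle g_1,\ldots,g_n\rangle\in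 A_1\times\cdots\times A_n\}\in\mathcal{K}$. *)

(* Defs.v *)
From Stdlib Require Import Reals Lra List.
Open Scope R_scope.
Set Implicit Arguments.

Section Gambles.
Variable Omega : Type.

Definition bounded (f : Omega -> R) : Prop :=
  exists M : R, forall w, Rabs (f w) <= M.

Definition gamble : Type := { f : Omega -> R | bounded f }.

Definition gval (g : gamble) : Omega -> R := proj1_sig g.

Lemma bounded0 : bounded (fun _ => 0).
Proof. exists 0; intro w; rewrite Rabs_R0; lra. Qed.

Definition gzero : gamble := exist _ (fun _ => 0) bounded0.

Lemma boundedD (f g : gamble) : bounded (fun w => gval f w + gval g w).
Proof.
  destruct f as [f [M1 H1]], g as [g [M2 H2]]; simpl.
  exists (M1 + M2); intro w.
  eapply Rle_trans; [apply Rabs_triang|]. specialize (H1 w); specialize (H2 w); lra.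
Qed.

Definition gadd (f g : gamble) : gamble := exist _ _ (boundedD f g).

Lemma boundedZ (l : R) (g : gamble) : bounded (fun w => l * gval g w).
Proof.
  destruct g as [g [M H]]; simpl.
  exists (Rabs l * M); intro w. rewrite Rabs_mult.
  apply Rmult_le_compat_l; [apply Rabs_pos | apply H].
Qed.

Definition gscale (l : R) (g : gamble) : gamble := exist _ _ (boundedZ l g).

Definition gle (f g : gamble) : Prop := forall w, gval f w <= gval g w.

Definition gpos (f : gamble) : Prop := gle gzero f /\ f <> gzero.

Definition gset : Type := gamble -> Prop.

Definition posi (B : gset) (f : gamble) : Prop :=
  exists (m : nat) (lam : nat -> R) (h : nat -> gamble),
    (1 <= m)%nat /\
    (forall i, (i < m)%nat -> 0 < lam i /\ B (h i)) /\
    forall w, gval f w = sum_f_R0 (fun i => lam i * gval (h i) w) (m - 1).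

Definition coherentD (D : gset) : Prop :=
  ~ D gzero /\
  (forall g, gpos g -> D g) /\
  (forall g l, D g -> 0 < l -> D (gscale l g)) /\
  (forall f g, D f -> D g -> D (gadd f g)).

Definition coherentK (K : gset -> Prop) : Prop :=
  ~ K (fun _ => False) /\
  (forall A, K A -> K (fun g => A g /\ g <> gzero)) /\
  (forall g, gpos g -> K (fun h => h = g)) /\
  (forall A B : gset, K A -> (forall g, A g -> B g) -> K B) /\
  (forall (A : gset) (f : gamble -> gamble),
      K A -> (forall g, A g -> gle g (f g)) ->
      K (fun h => exists g, A g /\ h = f g)) /\
  (* K_Add: As = [A_1; ...; A_n]; tuples <g_1,...,g_n> are lists gs with
     g_i in A_i; F selects for each tuple a member of posi({g_1,...,g_n}) *)
  (forall (As : list gset) (F : list gamble -> gamble),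
      Forall K As ->
      (forall gs, Forall2 (fun (A : gset) g => A g) As gs ->
                  posi (fun h => In h gs) (F gs)) ->
      K (fun h => exists gs, Forall2 (fun (A : gset) g => A g) As gs /\ h = F gs)).

Definition proper_filter (F : (gset -> Prop) -> Prop) : Prop :=
  (forall DD, F DD -> forall D, DD D -> coherentD D) /\
  (exists DD, F DD) /\
  ~ F (fun _ => False) /\
  (forall DD1 DD2, F DD1 -> F DD2 -> F (fun D => DD1 D /\ DD2 D)) /\
  (forall DD1 DD2 : gset -> Prop, F DD1 ->
      (forall D, DD1 D -> DD2 D) -> (forall D, DD2 D -> coherentD D) -> F DD2).

Definition filter_rep (F : (gset -> Prop) -> Prop) (B : gset) : Prop :=
  exists DD, F DD /\ forall D, DD D -> exists g, B g /\ D g.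

End Gambles.

(* Main.v *)
Require Import Defs.
From Stdlib Require Import Reals List.
From Stdlib Require Import Reals List Lra Lia ProofIrrelevance FunctionalExtensionality ClassicalEpsilon Classical.
Open Scope R_scope.

Lemma gext {Om : Type} (f g : gamble Om) : (forall w, gval f w = gval g w) -> f = g.
Proof.
  destruct f as [f pf], g as [g pg]; simpl; intro H.
  apply subset_eq_compat; apply functional_extensionality; auto.
Qed.

Lemma gval_add {Om} (f g : gamble Om) w : gval (gadd f g) w = gval f w + gval g w.
Proof. reflexivity. Qed.
Lemma gval_scale {Om} l (f : gamble Om) w : gval (gscale l f) w = l * gval f w.
Proof. reflexivity. Qed.
Lemma gval_zero {Om} w : gval (gzero Om) w = 0.
Proof. reflexivity. Qed.

Lemma posi_single {Om} (Sg : gset Om) g : Sg g -> posi Sg g.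
Proof.
  intro Hg. exists 1%nat, (fun _ => 1), (fun _ => g). split; [lia|split].
  - intros; split; [lra|auto].
  - intro w; simpl; ring.
Qed.

Lemma posi_scale {Om} (Sg : gset Om) g l : posi Sg g -> 0 < l -> posi Sg (gscale l g).
Proof.
  intros [m [lam [h [Hm [Hp Hs]]]]] Hl.
  exists m, (fun i => l * lam i), h. split; [auto|split].
  - intros i Hi; destruct (Hp i Hi); split; auto. apply Rmult_lt_0_compat; auto.
  - intro w; rewrite gval_scale, Hs, scal_sum. apply sum_eq; intros; ring.
Qed.

Lemma posi_add {Om} (Sg : gset Om) f g : posi Sg f -> posi Sg g -> posi Sg (gadd f g).
Proof.
  intros [m1 [l1 [h1 [Hm1 [Hp1 Hs1]]]]] [m2 [l2 [h2 [Hm2 [Hp2 Hs2]]]]].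
  exists (m1 + m2)%nat,
    (fun i => if Nat.ltb i m1 then l1 i else l2 (i - m1)%nat),
    (fun i => if Nat.ltb i m1 then h1 i else h2 (i - m1)%nat).
  split; [lia|split].
  - intros i Hi. destruct (Nat.ltb i m1) eqn:E.
    + apply Nat.ltb_lt in E; auto.
    + apply Nat.ltb_ge in E; apply Hp2; lia.
  - intro w. rewrite gval_add, Hs1, Hs2.
    rewrite (tech2 _ (m1 - 1) (m1 + m2 - 1)) by lia.
    f_equal.
    + apply sum_eq; intros i Hi. destruct (Nat.ltb i m1) eqn:E; auto.
      apply Nat.ltb_ge in E; lia.
    + replace (m1 + m2 - 1 - S (m1 - 1))%nat with (m2 - 1)%nat by lia.
      apply sum_eq; intros i Hi.
      destruct (Nat.ltb (S (m1 - 1) + i) m1) eqn:E.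
      * apply Nat.ltb_lt in E; lia.
      * replace (S (m1 - 1) + i - m1)%nat with i by lia. reflexivity.
Qed.

Lemma posi_mono {Om} (Sg T : gset Om) f : (forall g, Sg g -> T g) -> posi Sg f -> posi T f.
Proof.
  intros HST [m [l [h [Hm [Hp Hs]]]]]. exists m, l, h; split; [auto|split; [|auto]].
  intros i Hi; destruct (Hp i Hi); auto.
Qed.

Fixpoint psum {Om} (l : nat -> R) (h : nat -> gamble Om) (n : nat) : gamble Om :=
  match n with
  | O => gscale (l O) (h O)
  | S n => gadd (psum l h n) (gscale (l (S n)) (h (S n)))
  end.

Lemma psum_val {Om} l (h : nat -> gamble Om) n w :
  gval (psum l h n) w = sum_f_R0 (fun i => l i * gval (h i) w) n.
Proof.
  induction n; simpl; [reflexivity|]. rewrite <- IHn. reflexivity.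
Qed.

Lemma coh_posi {Om} (D Sg : gset Om) f :
  coherentD D -> (forall g, Sg g -> D g) -> posi Sg f -> D f.
Proof.
  intros [H0 [Hpos [Hsc Hadd]]] HS [m [l [h [Hm [Hp Hs]]]]].
  assert (Hf : f = psum l h (m - 1)).
  { apply gext; intro w; rewrite Hs, psum_val; reflexivity. }
  rewrite Hf.
  assert (forall n, (n < m)%nat -> D (psum l h n)).
  { induction n; intro Hn; simpl.
    - destruct (Hp 0%nat Hn); apply Hsc; auto.
    - destruct (Hp (S n) Hn). apply Hadd; [apply IHn; lia|]. apply Hsc; auto. }
  apply H; lia.
Qed.

Lemma gpos_ex {Om} (g : gamble Om) : gpos g -> exists w, 0 < gval g w.
Proof.
  intros [Hle Hne]. apply NNPP; intro Hn. apply Hne, gext; intro w.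
  rewrite gval_zero. specialize (Hle w); rewrite gval_zero in Hle.
  destruct (Rle_lt_or_eq_dec _ _ Hle) as [Hl|He]; [exfalso; apply Hn; eauto| auto].
Qed.

Lemma ex_gpos {Om} (g : gamble Om) : gle (gzero Om) g -> (exists w, 0 < gval g w) -> gpos g.
Proof.
  intros Hle [w Hw]; split; auto. intro E; rewrite E in Hw; rewrite gval_zero in Hw; lra.
Qed.

Definition Dg {Om} (gs : list (gamble Om)) (x : gamble Om) : Prop :=
  gpos x \/ exists c, posi (fun h => In h gs) c /\ gle c x.

Lemma Dg_coh {Om} (gs : list (gamble Om)) : ~ Dg gs (gzero Om) -> coherentD (Dg gs).
Proof.
  intro Hz. split; [auto|split; [|split]].
  - intros g Hg; left; auto.
  - intros g l [Hg|[c [Hc Hle]]] Hl.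
    + left. destruct (gpos_ex _ Hg) as [w Hw]. destruct Hg as [Hg _].
      apply ex_gpos.
      * intro v; specialize (Hg v); rewrite gval_zero in *; rewrite gval_scale.
        apply Rmult_le_pos; lra.
      * exists w; rewrite gval_scale; apply Rmult_lt_0_compat; auto.
    + right; exists (gscale l c); split; [apply posi_scale; auto|].
      intro w; rewrite !gval_scale; apply Rmult_le_compat_l; [lra|apply Hle].
  - intros f g [Hf|[c [Hc Hle]]] [Hg|[d [Hd Hle']]].
    + left. destruct (gpos_ex _ Hf) as [w Hw]. destruct Hf as [Hf _], Hg as [Hg _].
      apply ex_gpos.
      * intro v; specialize (Hf v); specialize (Hg v); rewrite gval_zero in *; rewrite gval_add; lra.
      * exists w; specialize (Hg w); rewrite gval_zero in *; rewrite gval_add; lra.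
    + right; exists d; split; auto. destruct Hf as [Hf _].
      intro w; specialize (Hf w); specialize (Hle' w); rewrite gval_zero in *; rewrite gval_add; lra.
    + right; exists c; split; auto. destruct Hg as [Hg _].
      intro w; specialize (Hg w); specialize (Hle w); rewrite gval_zero in *; rewrite gval_add; lra.
    + right; exists (gadd c d); split; [apply posi_add; auto|].
      intro w; specialize (Hle w); specialize (Hle' w); rewrite !gval_add; lra.
Qed.

Lemma forall2_meet {Om} (As : list (gset Om)) gs (D : gset Om) :
  Forall2 (fun (A : gset Om) g => A g) As gs -> (forall g, In g gs -> D g) ->
  Forall (fun A => exists g, A g /\ D g) As.
Proof.
  induction 1; intro HD; constructor.
  - exists y; split; auto; apply HD; left; auto.
  - apply IHForall2; intros; apply HD; right; auto.
Qed.

Lemma key {Om} (K : gset Om -> Prop) (Bs : list (gset Om)) (B : gset Om) :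
  coherentK K -> Forall K Bs ->
  (forall D, coherentD D -> Forall (fun A => exists g, A g /\ D g) Bs -> exists g, B g /\ D g) ->
  K B.
Proof.
  intros HK HBs HD. destruct HK as [Hemp [H0 [Hpos [Hsup [Hdom Hadd]]]]].
  destruct (classic (exists b, B b /\ gpos b)) as [[b [Hb Hbp]]|Hnb].
  { apply (Hsup (fun h => h = b)); [apply Hpos; auto | intros; subst; auto]. }
  pose (P := fun gs c => Forall2 (fun (A : gset Om) g => A g) Bs gs ->
     posi (fun h => In h gs) c /\ (gle c (gzero Om) \/ exists b, B b /\ gle c b)).
  assert (HP : forall gs, exists c, P gs c).
  { intro gs. destruct (classic (Forall2 (fun (A : gset Om) g => A g) Bs gs)) as [HF|HF];
      [| exists (gzero Om); intro; contradiction].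
    destruct (classic (Dg gs (gzero Om))) as [Hz|Hz].
    - destruct Hz as [Hz|[c [Hc Hle]]]. { destruct Hz; congruence. }
      exists c; intros _; auto.
    - pose proof (Dg_coh gs Hz) as Hc. destruct (HD (Dg gs) Hc) as [b [Hb Hdb]].
      + apply forall2_meet with gs; auto. intros g Hg; right; exists g; split;
          [apply posi_single; auto| intro; lra].
      + destruct Hdb as [Hdb|[c [Hc' Hle]]]. { exfalso; apply Hnb; eauto. }
        exists c; intros _; split; auto; right; eauto. }
  pose (F := fun gs => proj1_sig (constructive_indefinite_description _ (HP gs))).
  assert (HF : forall gs, P gs (F gs)) by (intro; unfold F; apply proj2_sig).
  pose proof (Hadd Bs F HBs (fun gs H => proj1 (HF gs H))) as HA.
  pose (f := fun c => match excluded_middle_informative (exists b, B b /\ gle c b) with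
                      | left H => proj1_sig (constructive_indefinite_description _ H)
                      | right _ => gzero Om end).
  assert (Hf1 : forall c, (exists b, B b /\ gle c b) -> B (f c) /\ gle c (f c)).
  { intros c Hc; unfold f; destruct (excluded_middle_informative _); [|contradiction].
    apply proj2_sig. }
  assert (Hf2 : forall c, ~ (exists b, B b /\ gle c b) -> f c = gzero Om).
  { intros c Hc; unfold f; destruct (excluded_middle_informative _); [contradiction|auto]. }
  pose proof (Hdom _ f HA) as HI.
  assert (HI' : K (fun h => exists g, (exists gs, Forall2 (fun (A : gset Om) g => A g) Bs gs /\ g = F gs) /\ h = f g)).
  { apply HI. intros g [gs [Hgs ->]]. destruct (HF gs Hgs) as [_ [Hle|Hb]].
    - destruct (classic (exists b, B b /\ gle (F gs) b)) as [Hb|Hb].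
      + apply Hf1; auto.
      + rewrite Hf2; auto.
    - apply Hf1; auto. }
  apply H0 in HI'. apply (Hsup _ _ HI').
  intros h [[g [_ ->]] Hne].
  destruct (classic (exists b, B b /\ gle g b)) as [Hb|Hb].
  - apply Hf1; auto.
  - rewrite Hf2 in Hne; auto; congruence.
Qed.

Lemma dom_coh {Om} (D : gset Om) g f : coherentD D -> D g -> gle g f -> D f.
Proof.
  intros HD Hg Hle. destruct HD as [H0 [Hpos [Hsc Hadd]]].
  pose (h := gadd f (gscale (-1) g)).
  destruct (classic (h = gzero Om)) as [Hh|Hh].
  - replace f with g; auto. apply gext; intro w.
    assert (E : gval h w = 0) by (rewrite Hh; reflexivity).
    unfold h in E; rewrite gval_add, gval_scale in E; lra.
  - replace f with (gadd g h).
    + apply Hadd; auto. apply Hpos. split; auto.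
      intro w; specialize (Hle w); unfold h; rewrite gval_zero, gval_add, gval_scale; lra.
    + apply gext; intro w; unfold h; rewrite !gval_add, gval_scale; ring.
Qed.

Lemma meet_forall2 {Om} (As : list (gset Om)) (D : gset Om) :
  Forall (fun A => exists g, A g /\ D g) As ->
  exists gs, Forall2 (fun (A : gset Om) g => A g) As gs /\ (forall g, In g gs -> D g).
Proof.
  induction 1 as [|A As [g [HA HDg]] _ [gs [H1 H2]]].
  - exists nil; split; [constructor|intros g []].
  - exists (g :: gs); split; [constructor; auto|].
    intros h [<-|Hh]; auto.
Qed.

Theorem mainTheorem11 (Omega : Type) (HOmega : inhabited Omega)
  (K : gset Omega -> Prop) :
  (coherentK K <->
     exists F : (gset Omega -> Prop) -> Prop,
       proper_filter F /\ forall B : gset Omega, K B <-> filter_rep F B) /\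
  (forall F : (gset Omega -> Prop) -> Prop,
     proper_filter F -> (forall B : gset Omega, K B <-> filter_rep F B) ->
     forall B : gset Omega,
       filter_rep F B <-> F (fun D => coherentD D /\ exists g, B g /\ D g)).
Proof.
  split; [split|].
  - intro HK.
    exists (fun DD => (forall D, DD D -> coherentD D) /\ exists Bs, Forall K Bs /\
        forall D, coherentD D -> Forall (fun A => exists g, A g /\ D g) Bs -> DD D).
    split; [split; [|split; [|split; [|split]]]|].
    + intros DD [H _]; auto.
    + exists (fun D => coherentD D); split; auto. exists nil; split; auto.
    + intros [_ [Bs [HBs HD]]]. destruct HK as [Hemp Hr]. apply Hemp.
      apply (key K Bs); auto.
      split; auto. intros D Hc Hm; destruct (HD D Hc Hm).
    + intros DD1 DD2 [Hc1 [Bs1 [HB1 HD1]]] [Hc2 [Bs2 [HB2 HD2]]]. split.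
      * intros D [H _]; auto.
      * exists (Bs1 ++ Bs2); split; [apply Forall_app; auto|].
        intros D Hc Hm; apply Forall_app in Hm; destruct Hm; split; auto.
    + intros DD1 DD2 [Hc1 [Bs1 [HB1 HD1]]] Hsub Hc2. split; auto.
      exists Bs1; split; auto.
    + intro B; split.
      * intro HB. exists (fun D => coherentD D /\ exists g, B g /\ D g). split.
        -- split; [intros D [H _]; auto|]. exists (B :: nil); split; auto.
           intros D Hc Hm; inversion Hm; auto.
        -- intros D [_ H]; auto.
      * intros [DD [[_ [Bs [HBs HD]]] Hm]]. apply (key K Bs); auto.
  - intros [F [[Hc [Hne [Hnemp [Hint Hup]]]] HKF]].
    split; [|split; [|split; [|split; [|split]]]].
    + rewrite HKF. intros [DD [HDD Hm]]. apply Hnemp. apply (Hup DD); auto.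
      * intros D HD; destruct (Hm D HD) as [g [[] _]].
      * intros D [].
    + intros A; rewrite !HKF. intros [DD [HDD Hm]]. exists DD; split; auto.
      intros D HD. destruct (Hm D HD) as [g [HA HDg]]. exists g; split; auto.
      split; auto. intro E; subst. destruct (Hc DD HDD D HD) as [H0 _]; auto.
    + intros g Hg; rewrite HKF. destruct Hne as [DD HDD]. exists DD; split; auto.
      intros D HD; exists g; split; auto. destruct (Hc DD HDD D HD) as [_ [Hp _]]; auto.
    + intros A B; rewrite !HKF. intros [DD [HDD Hm]] Hsub. exists DD; split; auto.
      intros D HD. destruct (Hm D HD) as [g [HA HDg]]. exists g; auto.
    + intros A f; rewrite !HKF. intros [DD [HDD Hm]] Hle. exists DD; split; auto.
      intros D HD. destruct (Hm D HD) as [g [HA HDg]]. exists (f g); split; eauto.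
      apply dom_coh with g; auto. apply (Hc DD); auto.
    + intros As Fs HAs Hp. rewrite HKF.
      assert (HDD : exists DD, F DD /\ forall D, DD D -> Forall (fun A => exists g, A g /\ D g) As).
      { clear Hp. induction HAs as [|A As HA _ IH].
        - destruct Hne as [DD HDD]; exists DD; split; auto.
        - rewrite HKF in HA. destruct HA as [DD1 [H1 Hm1]], IH as [DD2 [H2 Hm2]].
          exists (fun D => DD1 D /\ DD2 D); split; auto.
          intros D [HD1 HD2]; constructor; auto. }
      destruct HDD as [DD [HDD Hm]]. exists DD; split; auto.
      intros D HD. destruct (meet_forall2 As D (Hm D HD)) as [gs [H1 H2]].
      exists (Fs gs); split; eauto.
      apply coh_posi with (fun h => In h gs); auto. apply (Hc DD); auto.
  - intros F [Hc [Hne [Hnemp [Hint Hup]]]] _ B; split.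
    + intros [DD [HDD Hm]]. apply (Hup DD); auto.
      * intros D HD; split; [apply (Hc DD); auto| apply Hm; auto].
      * intros D [HD _]; auto.
    + intros H. exists (fun D => coherentD D /\ exists g, B g /\ D g); split; auto.
      intros D [_ H']; auto.
Qed.
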